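(* Let $n>30$ with $n\equiv 0\pmod 6$, and let $\mathcal{H}$ and $\Pi$ be as defined in the context. Let $M$ be a maximal subgroup of $S_n$ that is imprimitive (i.e. the stabilizer of a partition of $\{1,\dots,n\}$ into $\ell$ blocks of size $k$, with $k\ell=n$, $k,\ell\ge 2$) and $M\notin\mathcal{H}$. Then $|M\cap\Pi|<|H\cap\Pi|$ for every $H\in\mathcal{H}$.
   Context: $S_n$ is the symmetric group on $\{1,\dots,n\}$, $n\equiv 0\pmod 6$. $\mathcal{H}$ consists of: all stabilizers in $S_n$ of partitions of $\{1,\dots,n\}$ into two blocks of size $n/2$ (a stabilizer may swap the blocks); $A_n$; and, for $1\le i\le n/3-1$, all setwise stabilizers of $i$-element subsets. $\Pi=\bigcup_{i=-1}^{n/3-1}\Pi_i$ where (cycle lengths listed account for all $n$ points): $\Pi_{-1}$ = $n$-cycles; $\Pi_0$ = products of two disjoint cycles of lengths $n/2-1,n/2+1$ if $n/2$ is even, resp. $n/2-2,n/2+2$ if $n/2$ is odd; $\Pi_1$ = elements with exactly one fixed point and two further cycles of lengths $n/2-2,n/2+1$; for odd $3\le i\le n/3-1$, $\Pi_i$ = products of three disjoint cycles of lengths $i,(n-i-1)/2,(n-i+1)/2$; for even $2\le i\le n/3-1$ with $(n-i)/2$ odd, lengths $i,(n-i)/2,(n-i)/2$; for even $4\le i\le n/3-1$ with $(n-i)/2$ even, lengths $i,(n-i)/2-1,(n-i)/2+1$; if $(n-2)/2$ is even, $\Pi_2$ has lengths $2,n/2-4,n/2+2$. *)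

(* Defs.v *)
From mathcomp Require Import all_boot all_fingroup all_solvable.
Set Implicit Arguments. Unset Strict Implicit. Unset Printing Implicit Defensive.

(* S_n is the full permutation group of 'I_n (points 0..n-1 instead of 1..n). *)

(* Multiset of cycle lengths of s (fixed points count as cycles of length 1). *)
Definition cycle_lengths n (s : {perm 'I_n}) : seq nat :=
  [seq #|(X : {set 'I_n})| | X <- enum (porbits s)].

Definition has_cycle_type n (s : {perm 'I_n}) (c : seq nat) : bool :=
  perm_eq (cycle_lengths s) c.

(* The set Pi = union of Pi_i, i = -1, ..., n/3 - 1. *)
Definition inPi n (s : {perm 'I_n}) : bool :=
  [|| (* Pi_{-1} *)
      has_cycle_type s [:: n],
      (* Pi_0 *)
      ~~ odd (n %/ 2) && has_cycle_type s [:: n %/ 2 - 1; n %/ 2 + 1],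
      odd (n %/ 2) && has_cycle_type s [:: n %/ 2 - 2; n %/ 2 + 2],
      (* Pi_1 *)
      has_cycle_type s [:: 1; n %/ 2 - 2; n %/ 2 + 1],
      [exists i : 'I_n, [&& odd i, 3 <= i, i <= n %/ 3 - 1 &
        has_cycle_type s [:: val i; (n - i - 1) %/ 2; (n - i + 1) %/ 2]]],
      [exists i : 'I_n, [&& ~~ odd i, 2 <= i, i <= n %/ 3 - 1, odd ((n - i) %/ 2) &
        has_cycle_type s [:: val i; (n - i) %/ 2; (n - i) %/ 2]]],
      [exists i : 'I_n, [&& ~~ odd i, 4 <= i, i <= n %/ 3 - 1, ~~ odd ((n - i) %/ 2) &
        has_cycle_type s [:: val i; (n - i) %/ 2 - 1; (n - i) %/ 2 + 1]]]
    | (* Pi_2 when (n-2)/2 is even *)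
      ~~ odd ((n - 2) %/ 2) && has_cycle_type s [:: 2; n %/ 2 - 4; n %/ 2 + 2]].

Definition Pi n : {set {perm 'I_n}} := [set s | inPi s].

Definition part_stab n (P : {set {set 'I_n}}) : {set {perm 'I_n}} :=
  [set s : {perm 'I_n} | [forall B in P, (s @: B) \in P]].

Definition set_stab n (A : {set 'I_n}) : {set {perm 'I_n}} :=
  [set s : {perm 'I_n} | s @: A == A].

Definition uniform_partition n (P : {set {set 'I_n}}) (k l : nat) : Prop :=
  [/\ partition P [set: 'I_n], #|P| = l & forall B, B \in P -> #|B| = k].

Definition inHfam n (H : {set {perm 'I_n}}) : Prop :=
  (exists P, uniform_partition P (n %/ 2) 2 /\ H = part_stab P)
  \/ H = ('Alt_('I_n))%g
  \/ (exists i (A : {set 'I_n}), [/\ 1 <= i, i <= n %/ 3 - 1, #|A| = i & H = set_stab A]).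

(* Main.v *)
Require Import Defs.
From mathcomp Require Import all_boot all_fingroup all_solvable.
From mathcomp Require Import zify.
Set Implicit Arguments. Unset Strict Implicit. Unset Printing Implicit Defensive.

Lemma num_base k : 1 <= k -> (k`!)^3 * 27^k <= 5 * k * (3*k)`!.
Proof.
elim: k => [//|k IH] _.
case: k IH => [|k] IH; first by [].
have IH' := IH isT.
set k1 := k.+1 in IH' *.
have -> : 3 * k1.+1 = (3*k1).+3 by lia.
rewrite !factS.
have E : (k1.+1 * k1`!) ^ 3 * 27 ^ k1.+1 = ((k1.+1)^3 * 27) * ((k1`!)^3 * 27^k1).
  by rewrite expnMn expnS mulnACA.
rewrite E.
apply: (@leq_trans ((k1.+1)^3 * 27 * (5 * k1 * (3*k1)`!))); first by rewrite leq_mul2l IH' orbT.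
have P : (k1.+1)^3 * 27 * (5 * k1) <= 5 * k1.+1 * ((3*k1).+3 * ((3*k1).+2 * (3*k1).+1)) by nia.
have := leq_mul P (leqnn (3*k1)`!). rewrite -!mulnA.
move=> h; apply: leq_trans h _; rewrite !mulnA leqnn //.
Qed.

Lemma fact_gap a k j : j <= k -> a`! * j`! * (a+k)^j <= (a+j)`! * k^j.
Proof.
elim: j => [|j IH] hj; first by rewrite !muln1 addn0.
have IH' := IH (ltnW hj).
rewrite addnS factS expnS [k^j.+1]expnS.
have P : (j.+1) * (a+k) <= (a+j).+1 * k by nia.
apply: (@leq_trans ((j.+1 * (a+k)) * (a`! * j`! * (a + k) ^ j))).
  by apply: eq_leq; lia.
apply: (@leq_trans (((a+j).+1 * k) * ((a + j)`! * k ^ j))).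
  by apply: leq_mul P IH'.
by rewrite [((a + j).+1)`!]factS; apply: eq_leq; lia.
Qed.

Lemma pow_gap k l : 4 <= k -> 3 <= l -> l * 3^k <= (l.+1)^k.
Proof.
move=> hk hl; elim: k hk => [//|k IH] hk.
case: (ltngtP k 3) => h; first by lia.
- have IH' := IH h.
  rewrite expnS [_ ^ k.+1]expnS.
  apply: (@leq_trans (3 * (l.+1)^k)); first by lia.
  by apply: leq_mul => //; lia.
- subst k. nia.
Qed.

Lemma num_step k l : 2 <= k -> 3 <= l -> l * k`! * 3^k * (k*l)`! <= (k*l+k)`!.
Proof.
move=> hk hl.
case: (ltngtP k 4) => h.
- have [->|->] : k = 2 \/ k = 3 by lia.
  + have -> : 2 * l + 2 = (2*l).+2 by lia.
    rewrite [(2*l).+2`!]factS [(2*l).+1`!]factS; have f2 : 2`! = 2 by []. have P : l * 2`! * 3^2 <= (2*l).+2 * (2*l).+1 by rewrite f2; nia.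
    apply: leq_trans (leq_mul P (leqnn (2*l)`!)) _; apply: eq_leq; lia.
  + have -> : 3 * l + 3 = (3*l).+3 by lia.
    rewrite [(3*l).+3`!]factS [(3*l).+2`!]factS [(3*l).+1`!]factS; have f3 : 3`! = 6 by []. have P : l * 3`! * 3^3 <= (3*l).+3 * ((3*l).+2 * (3*l).+1) by rewrite f3; nia.
    apply: leq_trans (leq_mul P (leqnn (3*l)`!)) _; apply: eq_leq; lia.
- have G := fact_gap (k*l) (leqnn k).
  have E : (k*l+k)^k = k^k * (l.+1)^k by rewrite -expnMn; congr (_ ^ _); lia.
  rewrite E in G.
  have kk : 0 < k^k by rewrite expn_gt0; lia.
  have G' : (k*l)`! * k`! * (l.+1)^k <= (k*l+k)`!.
    rewrite -(leq_pmul2r kk). move: G; rewrite !mulnA => G.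
    by apply: leq_trans G; apply: eq_leq; lia.
  apply: leq_trans G'.
  have P := pow_gap (ltnW h) hl.
  apply: (@leq_trans ((k*l)`! * k`! * (l * 3^k))); first by apply: eq_leq; lia.
  by rewrite leq_mul2l P orbT.
- subst k. have G := fact_gap (4*l) (leqnn 4).
  have E : (4*l+4)^4 = 4^4 * (l.+1)^4 by rewrite -expnMn; congr (_ ^ _); lia.
  rewrite E in G.
  have G' : (4*l)`! * 4`! * (l.+1)^4 <= (4*l+4)`!.
    rewrite -(@leq_pmul2r (4^4)) //. move: G; rewrite !mulnA => G.
    by apply: leq_trans G; apply: eq_leq; lia.
  apply: leq_trans G'.
  have P := pow_gap (leqnn 4) hl.
  apply: (@leq_trans ((4*l)`! * 4`! * (l * 3^4))); first by apply: eq_leq; lia.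
  by rewrite leq_mul2l P orbT.
Qed.

Lemma num_phi k l : 2 <= k -> 3 <= l -> l`! * (k`!)^l * 3^(k*l) <= 10 * (k*l) * (k*l)`!.
Proof.
move=> hk; elim: l => [//|l IH] hl.
case: (ltnP l 3) => h.
- have e : l = 2 by lia.
  subst l. have B := num_base (ltnW hk).
  have e27 : 3^(k*3) = 27^k by rewrite mulnC expnM.
  have f3 : 3`! = 6 by [].
  have e3 : k * 3 = 3 * k by lia.
  rewrite e27 f3 e3.
  apply: (@leq_trans (6 * ((k`!)^3 * 27^k))); first by apply: eq_leq; lia.
  apply: (@leq_trans (6 * (5 * k * (3*k)`!))); first by rewrite leq_mul2l B.
  by apply: eq_leq; lia.
- have IH' := IH h.
  have St := num_step hk h.
  have -> : k * l.+1 = k*l + k by lia.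
  rewrite factS expnS expnD.
  apply: (@leq_trans ((l.+1 * k`! * 3^k) * (l`! * k`! ^ l * 3 ^ (k * l)))).
    by apply: eq_leq; lia.
  apply: (@leq_trans ((l.+1 * k`! * 3^k) * (10 * (k * l) * (k * l)`!))).
    by rewrite leq_mul2l IH' orbT.
  apply: (@leq_trans (10 * k * l.+1 * (l * k`! * 3 ^ k * (k * l)`!))).
    by apply: eq_leq; lia.
  apply: (@leq_trans (10 * k * l.+1 * (k * l + k)`!)).
    by rewrite leq_mul2l St orbT.
  by apply: eq_leq; lia.
Qed.

Lemma num_2block n : 36 <= n -> 10 * n^2 * 2^n < 3^n.
Proof.
elim: n => [//|n IH] hn.
case: (ltngtP n 35) => h; first by lia.
- have IH' := IH h.
  have e1 : 2^n.+1 = 2 * 2^n by rewrite expnS.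
  have e2 : 3^n.+1 = 3 * 3^n by rewrite expnS.
  rewrite e1 e2.
  have P : 10 * n.+1^2 * 2 <= 3 * (10 * n^2) by nia.
  have L : 10 * n.+1^2 * (2 * 2^n) = (10 * n.+1^2 * 2) * 2^n by rewrite !mulnA.
  rewrite L; apply: (@leq_ltn_trans (3 * (10 * n^2) * 2^n)); first by rewrite leq_mul2r P orbT.
  by rewrite -mulnA ltn_mul2l IH'.
- by subst n; lia.
Qed.

Lemma num_setstab j : 25 <= j -> 810 * j^4 < 16 * 2^j.
Proof.
elim: j => [//|j IH] hj.
case: (ltngtP j 24) => h; first by lia.
- have IH' := IH h.
  have e1 : 2^j.+1 = 2 * 2^j by rewrite expnS.
  rewrite e1.
  have P : (j.+1)^4 <= 2 * j^4 by nia.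
  apply: (@leq_trans (810 * (2 * j^4)).+1); first by rewrite ltnS leq_mul2l P.
  have -> : 810 * (2 * j^4) = 2 * (810 * j^4) by lia.
  have -> : 16 * (2 * 2^j) = 2 * (16 * 2^j) by lia.
  by rewrite ltn_mul2l.
- by subst j; lia.
Qed.


Local Open Scope group_scope.
Section Gen.
Variable T : finType.
Implicit Types (s g x : {perm T}).

Definition clen s : seq nat := [seq #|(X : {set T})| | X <- enum (porbits s)].

Lemma expJ s g i : (s ^ g) ^+ i = (s ^+ i) ^ g.
Proof. by rewrite conjXg. Qed.

Lemma porbitJ s g y : porbit (s ^ g) (g y) = g @: porbit s y.
Proof.
apply/setP => z; apply/porbitP/imsetP.
- case=> i ->; exists ((s ^+ i) y); first exact: mem_porbit.
  by rewrite expJ conjgE !permM permK.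
- case=> w /porbitP[i ->] ->; exists i.
  by rewrite expJ conjgE !permM permK.
Qed.

Lemma porbitsJ s g : porbits (s ^ g) = [set g @: O | O : {set T} in porbits s].
Proof.
apply/setP => O; apply/imsetP/imsetP.
- case=> y _ ->; exists (porbit s (g^-1 y)); first by apply: imset_f.
  by rewrite -porbitJ permKV.
- case=> O' /imsetP[y _ ->] ->; exists (g y) => //; by rewrite porbitJ.
Qed.

Lemma clenJ s g : perm_eq (clen (s ^ g)) (clen s).
Proof.
rewrite /clen porbitsJ.
have inj : injective (fun O : {set T} => g @: O) by apply: imset_inj; apply: perm_inj.
have pe : perm_eq (enum [set g @: O | O : {set T} in porbits s])
                  (map (fun O : {set T} => g @: O) (enum (porbits s))).
  apply: uniq_perm; first exact: enum_uniq.
    by rewrite map_inj_uniq ?enum_uniq.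
  move=> O; rewrite mem_enum; apply/imsetP/mapP => -[O' h ->]; exists O' => //.
    by rewrite mem_enum.
  by rewrite -mem_enum.
apply: perm_trans (perm_map _ pe) _.
rewrite -map_comp (@eq_map _ _ _ (fun X : {set T} => #|X|)); first exact: perm_refl.
by move=> O /=; rewrite card_imset //; apply: perm_inj.
Qed.
End Gen.

Section Gen2.
Variable T : finType.
Implicit Types (s g x : {perm T}).

Lemma perm_commX g x j w : commute g x -> g (((x ^+ j) : {perm T}) w) = (x ^+ j : {perm T}) (g w).
Proof.
move=> c; have c' := commuteX j c.
by rewrite -!permM c'.
Qed.

Lemma cent_bound x (y0 : T) : #|'C[x]| <= #|T| ^ #|porbits x|.
Proof.
set os := enum (porbits x).
set r := #|porbits x|.
pose rp (O : {set T}) := odflt y0 [pick y in O].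
have rpO y : rp (porbit x y) \in porbit x y.
  rewrite /rp; case: pickP => [z -> //|no]; by have := no y; rewrite porbit_id.
pose F (g : {perm T}) := [ffun i : 'I_r => g (rp (nth set0 os i))].
have inj : {in 'C[x] &, injective F}.
  move=> g1 g2 /cent1P c1 /cent1P c2 eqF; apply/permP => y.
  have Oin : porbit x y \in os by rewrite mem_enum; apply: imset_f.
  have ir : index (porbit x y) os < r by rewrite /r cardE index_mem.
  have := congr1 (fun f : {ffun 'I_r -> T} => f (Ordinal ir)) eqF; rewrite /F !ffunE /= nth_index //.
  move=> e.
  have := rpO y; rewrite porbit_sym => /porbitP[j ->].
  rewrite (perm_commX j _ c1) (perm_commX j _ c2).
  by rewrite e.
rewrite -(card_in_imset inj).
apply: (@leq_trans #|{ffun 'I_r -> T}|); first by apply: max_card.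
by rewrite card_ffun card_ord.
Qed.

Lemma class_bound (G : {group {perm T}}) x (y0 : T) : #|G| <= #|x ^: G| * #|T| ^ #|porbits x|.
Proof.
have L := Lagrange (subsetIl G 'C[x]).
rewrite index_cent1 in L.
rewrite -{1}L mulnC leq_mul2l; apply/orP; right.
apply: leq_trans (cent_bound x y0).
by apply: subset_leq_card; apply: subsetIr.
Qed.
End Gen2.

Section SStab.
Variable T : finType.

Lemma card_permT : #|{perm T}| = #|T|`!.
Proof.
rewrite -cardsT -card_perm; apply: eq_card => s; rewrite inE.
by symmetry; apply/subsetP => x _; rewrite inE.
Qed.

Definition sstab (A : {set T}) := [set s : {perm T} | s @: A == A].

Lemma sstab_group A : group_set (sstab A).
Proof.
apply/group_setP; split; first by rewrite inE; apply/eqP/setP => y; rewrite (eq_imset (g := id)) ?imset_id // => z; rewrite perm1.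
move=> s t; rewrite !inE => /eqP hs /eqP ht; apply/eqP.
rewrite (eq_imset (g := t \o s)); last by move=> z; rewrite permM.
by rewrite imset_comp hs ht.
Qed.

Canonical sstab_grp A := Group (sstab_group A).

Lemma sstab_astab A : 'C[A | ('P)^*] = sstab A.
Proof.
apply/setP => s; rewrite !inE /=.
by rewrite sub1set inE.
Qed.

Lemma sstab_card A : #|T|`! <= #|sstab A| * 'C(#|T|, #|A|).
Proof.
have E := card_orbit_stab ('P)^* [set: {perm T}] A.
rewrite setTI sstab_astab cardsT card_permT in E.
rewrite -E mulnC leq_mul2l; apply/orP; right.
rewrite -card_draws; apply: subset_leq_card; apply/subsetP => B /orbitP [s _ <-].
by rewrite inE /= card_imset //; apply: perm_inj.
Qed.
End SStab.

Section Chain.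
Variable n : nat.
Variable G : {group {perm 'I_n}}.
Variable SS : 'I_n -> {set 'I_n}.
Hypothesis HS : forall (z : 'I_n) g, g \in G -> (forall w : 'I_n, w < z -> g w = w) -> g z \in SS z.

Lemma chain_aux d : forall t, n - t = d -> forall K : {group {perm 'I_n}}, K \subset G ->
  (forall g, g \in K -> forall w : 'I_n, w < t -> g w = w) ->
  #|K| <= \prod_(z : 'I_n | t <= z) #|SS z|.
Proof.
elim: d => [|d IH] t ht K sKG fixK.
- rewrite big_pred0; last by move=> z; apply/negbTE; rewrite -ltnNge; apply: leq_trans (ltn_ord z) _; lia.
  rewrite -(cards1 (1 : {perm 'I_n})); apply: subset_leq_card; apply/subsetP => g gK.
  rewrite inE; apply/eqP/permP => w; rewrite perm1; apply: fixK => //.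
  by apply: leq_trans (ltn_ord w) _; lia.
- have tn : t < n by lia.
  pose z := Ordinal tn.
  have E := card_orbit_stab 'P K z.
  have sub : orbit 'P K z \subset SS z.
    apply/subsetP => y /orbitP[g gK <-]; rewrite /=.
    apply: HS; first by apply: (subsetP sKG).
    by move=> w; apply: fixK.
  have IH' := IH t.+1 ltac:(lia) [group of 'C_K[z | 'P]] (subset_trans (subsetIl _ _) sKG).
  have IH'' : #|'C_K[z | 'P]| <= \prod_(z0 : 'I_n | t.+1 <= z0) #|SS z0|.
    apply: IH' => g /setIP[gK /astab1P gz] w; rewrite ltnS leq_eqVlt => /orP[/eqP wz|wt].
      by have -> : w = z by apply: val_inj.
    by apply: fixK.
  rewrite -E (bigD1 z) //=; apply: leq_mul; first by apply: subset_leq_card.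
  apply: leq_trans IH'' _; apply: eq_leq; apply: eq_bigl => w.
  by rewrite /= -val_eqE /= ltn_neqAle andbC eq_sym.
Qed.

Lemma chain : #|G| <= \prod_(z : 'I_n) #|SS z|.
Proof.
have := @chain_aux (n - 0) 0 erefl G (subxx _) (fun g _ w h => ltac:(by [])).
by rewrite (eq_bigl xpredT).
Qed.
End Chain.

Section Rank.
Variable A : finType.
Variable le : rel A.

Lemma prod_rank (X : {set A}) :
  {in X, reflexive le} -> {in X & &, transitive le} ->
  {in X &, forall x y, le x y -> le y x -> x = y} -> {in X &, total le} ->
  (\prod_(x in X) #|[set y in X | le x y]|)%N = #|X|`!.
Proof.
have [m] := ubnP #|X|; elim: m X => // m IH X hX rf tr an to.
have [X0|[x1 x1X]] := set_0Vmem X.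
  by rewrite X0 big_set0 cards0.
pose up x := [set y in X | le x y].
pose x0 := [arg max_(x > x1 in X) #|up x|].
have x0X : x0 \in X by rewrite /x0; case: arg_maxnP.
have x0min : forall y, y \in X -> le x0 y.
  move=> y yX; rewrite /x0; case: arg_maxnP => // x xX xmax.
  case/orP: (to _ _ xX yX) => // yx.
  apply/negPn/negP => nxy.
  have := xmax y yX.
  have : up x \proper up y.
    rewrite properEneq; apply/andP; split.
      apply/negP => /eqP e. have : y \in up y by rewrite inE yX rf.
      by rewrite -e inE yX (negbTE nxy).
    by apply/subsetP => w; rewrite !inE => /andP[wX xw]; rewrite wX (tr x) // yx.
  by move=> /proper_card; rewrite ltnNge => /negP.
have upx0 : up x0 = X by apply/setP => y; rewrite inE; case yX: (y \in X) => //=; rewrite x0min.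
rewrite (bigD1 x0) //= -/(up x0) upx0.
have cX : #|X| = #|X :\ x0|.+1 by rewrite (cardsD1 x0 X) x0X.
rewrite cX factS; congr (_ * _)%N.
have hX' : #|X :\ x0| < m by rewrite -ltnS -cX.
rewrite -(IH _ hX'); last first.
- move=> x y /setD1P[_ xX] /setD1P[_ yX]; exact: to.
- move=> x y /setD1P[_ xX] /setD1P[_ yX]; exact: an.
- move=> x y z /setD1P[_ xX] /setD1P[_ yX] /setD1P[_ zX]; exact: tr.
- move=> x /setD1P[_ xX]; exact: rf.
apply: eq_big => x; first by rewrite !inE andbC.
move=> /andP[xX xx0]; apply: eq_card => y; rewrite !inE.
case yx0: (y == x0) => //=; move/eqP: yx0 => ->.
apply/negP => /andP[_ lx]; move/eqP: xx0; apply.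
by apply: an => //; apply: x0min.
Qed.
End Rank.

Section Wreath.
Variable n : nat.
Variable P : {set {set 'I_n}}.
Variables k l : nat.
Hypothesis Ppart : partition P [set: 'I_n].
Hypothesis Pcard : #|P| = l.
Hypothesis Psize : forall B, B \in P -> #|B| = k.
Hypothesis kpos : 0 < k.

Definition pstab := [set s : {perm 'I_n} | [forall B in P, (s @: B) \in P]].

Lemma pstab_group : group_set pstab.
Proof.
apply/group_setP; split.
  rewrite inE; apply/forallP => B; apply/implyP => BP.
  by rewrite (eq_imset (g := id)) ?imset_id // => z; rewrite perm1.
move=> s t; rewrite !inE => /forallP hs /forallP ht; apply/forallP => B; apply/implyP => BP.
rewrite (eq_imset (g := t \o s)); last by move=> z; rewrite permM.
rewrite imset_comp.
have := hs B; rewrite BP /= => sB.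
by have := ht (s @: B); rewrite sB.
Qed.

Canonical pstab_grp := Group pstab_group.

Let covP : cover P = [set: 'I_n].
Proof. by case/and3P: Ppart => /eqP. Qed.
Let trP : trivIset P.
Proof. by case/and3P: Ppart. Qed.
Let nz0 : set0 \notin P.
Proof. by case/and3P: Ppart. Qed.

Lemma pblock_inP (z : 'I_n) : pblock P z \in P.
Proof. by apply: pblock_mem; rewrite covP inE. Qed.
Lemma in_pblock (z : 'I_n) : z \in pblock P z.
Proof. by rewrite mem_pblock covP inE. Qed.
Lemma pblock_def B (z : 'I_n) : B \in P -> z \in B -> pblock P z = B.
Proof. by move=> BP zB; apply: def_pblock. Qed.

Definition isMin (z : 'I_n) := [forall y in pblock P z, z <= y].
Definition SS (z : 'I_n) := if isMin z then cover [set B' in P | [forall y in B', z <= y]]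
                   else [set y in pblock P z | z <= y].

Lemma HS (z : 'I_n) g : g \in pstab -> (forall w : 'I_n, w < z -> g w = w) -> g z \in SS z.
Proof.
rewrite inE => /forallP gP fix_.
set B := pblock P z.
have BP : B \in P := pblock_inP z.
have zB : z \in B := in_pblock z.
have gBP : g @: B \in P by have := gP B; rewrite BP.
rewrite /SS; case: ifP => hmin.
- apply/bigcupP; exists (g @: B); last by apply: imset_f.
  rewrite inE gBP /=; apply/forallP => y'; apply/implyP => /imsetP[y yB ->].
  rewrite leqNgt; apply/negP => lt.
  have := fix_ _ lt => /perm_inj e.
  move/forallP: hmin => /(_ y); rewrite yB /= => zy.
  by move: lt; rewrite e ltnNge zy.
- move/negbT: hmin => /forallPn[y]; rewrite negb_imply -ltnNge => /andP[yB yz].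
  have gy := fix_ _ yz.
  have gB : g @: B = B.
    rewrite -(pblock_def gBP (_ : y \in g @: B)); last by rewrite -{1}gy; apply: imset_f.
    by apply: pblock_def.
  rewrite inE -/B -{1}gB imset_f //=.
  rewrite leqNgt; apply/negP => lt.
  have := fix_ _ lt => /perm_inj e.
  by move: lt; rewrite e ltnn.
Qed.

Lemma pstab_card_le : #|pstab| <= \prod_(z : 'I_n) #|SS z|.
Proof. exact: (@chain n pstab_grp SS HS). Qed.


Lemma exists_min (B : {set 'I_n}) : B != set0 -> exists2 m, m \in B & forall y, y \in B -> m <= y.
Proof.
case/set0Pn => y0 y0B.
exists [arg min_(y < y0 in B) val y]; first by case: arg_minnP.
by case: arg_minnP => // m mB h y yB; apply: h.
Qed.

Definition leB (B B' : {set 'I_n}) := [exists x in B, [forall y in B', x <= y]].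

Lemma Bne0 B : B \in P -> B != set0.
Proof. by move=> BP; apply/negP => /eqP e; move: nz0; rewrite -e BP. Qed.

Lemma inner B : B \in P ->
  (\prod_(z in B) #|SS z|)%N = (#|[set B' in P | leB B B']| * k`!)%N.
Proof.
move=> BP.
have [m mB mmin] := exists_min (Bne0 BP).
have pbB z : z \in B -> pblock P z = B by move=> zB; apply: pblock_def.
have isMinE z : z \in B -> isMin z = (z == m).
  move=> zB; rewrite /isMin pbB //.
  case: eqP => [->|ne]; first by apply/forallP => y; apply/implyP; apply: mmin.
  apply/negP => /forallP h; apply: ne; apply: val_inj; apply/eqP; rewrite eqn_leq.
  by have := h m; rewrite mB /= => ->; rewrite mmin.
have QE : [set B' in P | [forall y in B', m <= y]] = [set B' in P | leB B B'].
  apply/setP => B'; rewrite !inE; case: (B' \in P) => //=.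
  apply/idP/idP.
    by move=> h; apply/existsP; exists m; rewrite mB.
  case/existsP => x /andP[xB /forallP h]; apply/forallP => y; apply/implyP => yB'.
  apply: leq_trans (mmin _ xB) _; by have := h y; rewrite yB'.
rewrite (bigD1 m) //= /SS isMinE // eqxx QE.
have cQ : #|cover [set B' in P | leB B B']| = (#|[set B' in P | leB B B']| * k)%N.
  apply: card_uniform_partition; first by move=> B'; rewrite inE => /andP[/Psize].
  apply/and3P; split => //.
    by apply: trivIsetS trP; apply/subsetP => B'; rewrite inE => /andP[].
  by rewrite inE negb_and nz0.
rewrite cQ -mulnA; congr (_ * _)%N.
have R := @prod_rank _ (fun a b : 'I_n => (a <= b)%N) B
  (fun x _ => leqnn x) (fun x y z _ _ _ => @leq_trans x y z)
  (fun x y _ _ h1 h2 => val_inj (anti_leq (introT andP (conj h1 h2))))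
  (fun x y _ _ => leq_total x y).
rewrite (Psize BP) in R; rewrite -R [RHS](bigD1 m) //=; congr (_ * _)%N.
  rewrite -(Psize BP); apply: eq_card => y; rewrite !inE.
  by case yB: (y \in B) => //=; rewrite mmin.
apply: eq_bigr => z /andP[zB zm].
by rewrite isMinE // (negbTE zm) pbB.
Qed.


Lemma prodSS : (\prod_(z : 'I_n) #|SS z|)%N = (l`! * (k`!)^l)%N.
Proof.
have -> : (\prod_(z : 'I_n) #|SS z|)%N = (\prod_(z in cover P) #|SS z|)%N.
  by apply: eq_bigl => z; rewrite covP inE.
rewrite big_trivIset //= (eq_bigr _ inner) big_split /= prod_nat_const Pcard.
congr (_ * _)%N.
rewrite -Pcard; apply: prod_rank.
- move=> B BP; have [m mB mmin] := exists_min (Bne0 BP).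
  by apply/existsP; exists m; rewrite mB; apply/forallP => y; apply/implyP; apply: mmin.
- move=> B2 B1 B3 _ _ _ /existsP[x1 /andP[x1B1 /forallP h1]] /existsP[x2 /andP[x2B2 /forallP h2]].
  apply/existsP; exists x1; rewrite x1B1; apply/forallP => y; apply/implyP => yB3.
  apply: leq_trans (_ : x1 <= x2) _; first by have := h1 x2; rewrite x2B2.
  by have := h2 y; rewrite yB3.
- move=> B1 B2 B1P B2P /existsP[x1 /andP[x1B1 /forallP h1]] /existsP[x2 /andP[x2B2 /forallP h2]].
  have e : x1 = x2.
    apply: val_inj; apply/eqP; rewrite eqn_leq.
    by have := h1 x2; rewrite x2B2 /= => ->; have := h2 x1; rewrite x1B1 /= => ->.
  subst x2. by rewrite -(pblock_def B1P x1B1) (pblock_def B2P x2B2).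
- move=> B1 B2 B1P B2P.
  have [m1 m1B m1min] := exists_min (Bne0 B1P).
  have [m2 m2B m2min] := exists_min (Bne0 B2P).
  case/orP: (leq_total m1 m2) => h; [apply/orP; left|apply/orP; right];
    apply/existsP; [exists m1; rewrite m1B|exists m2; rewrite m2B];
    apply/forallP => y; apply/implyP => yB.
  + by apply: leq_trans h (m2min _ yB).
  + by apply: leq_trans h (m1min _ yB).
Qed.

Lemma pstab_card : #|pstab| <= l`! * (k`!)^l.
Proof. by rewrite -prodSS; apply: pstab_card_le. Qed.
End Wreath.

Close Scope group_scope.

Local Open Scope group_scope.

Section NextNth.
Variable T : eqType.
Lemma next_nth_mod (c : seq T) x0 i : uniq c -> i < size c ->
  next c (nth x0 c i) = nth x0 c (i.+1 %% size c).
Proof.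
move=> uc ic; rewrite next_nth mem_nth //.
case: c uc ic => [//|y p] uc ic; rewrite index_uniq //=.
case: (ltngtP i (size p)) => h.
- by rewrite modn_small //=; apply: set_nth_default.
- by move: ic; rewrite /= ltnS leqNgt h.
- by rewrite h modnn /= nth_default.
Qed.

Lemma iter_next_mod (c : seq T) x0 i j : uniq c -> i < size c ->
  iter j (next c) (nth x0 c i) = nth x0 c ((i + j) %% size c).
Proof.
move=> uc ic; elim: j => [|j IH]; first by rewrite addn0 modn_small.
have sc : 0 < size c by lia.
rewrite iterS IH next_nth_mod ?ltn_pmod //.
by rewrite addnS -[((i + j) %% size c).+1]addn1 modnDml addn1.
Qed.
End NextNth.

Section CycSec.
Variable T : finType.
Variable cs : seq (seq T).
Hypothesis Hu : uniq (flatten cs).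
Hypothesis Hne : forall c, c \in cs -> c != [::].
Hypothesis Hcov : forall y : T, y \in flatten cs.

Lemma disj_cs c1 c2 y : c1 \in cs -> c2 \in cs -> y \in c1 -> y \in c2 -> c1 = c2.
Proof.
elim: cs Hu => [//|c cs' IH] /=; rewrite cat_uniq => /and3P[uc dis ucs'].
rewrite !inE => /orP[/eqP->|h1] /orP[/eqP->|h2] y1 y2 //.
- by move/hasP: dis; case; exists y => //; apply/flattenP; exists c2.
- by move/hasP: dis; case; exists y => //; apply/flattenP; exists c1.
- exact: IH.
Qed.

Lemma uniq_of_cs c : c \in cs -> uniq c.
Proof.
elim: cs Hu => [//|c' cs' IH] /=; rewrite cat_uniq => /and3P[uc _ ucs'].
by rewrite inE => /orP[/eqP->|h] //; apply: IH.
Qed.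

Definition cyc_of (y : T) := nth [::] cs (find (fun c => y \in c) cs).

Lemma cyc_ofP y : cyc_of y \in cs /\ y \in cyc_of y.
Proof.
have hh : has (fun c => y \in c) cs by apply/hasP; case/flattenP: (Hcov y) => c cin yc; exists c.
split; first by apply: mem_nth; rewrite -has_find.
by have := nth_find [::] hh.
Qed.

Lemma cyc_ofE c y : c \in cs -> y \in c -> cyc_of y = c.
Proof. by move=> cin yc; case: (cyc_ofP y) => h1 h2; apply: disj_cs h1 cin h2 yc. Qed.

Definition cycf (y : T) := next (cyc_of y) y.

Lemma cycf_inj : injective cycf.
Proof.
move=> y1 y2; rewrite /cycf.
case: (cyc_ofP y1) => i1 m1; case: (cyc_ofP y2) => i2 m2.
move=> e.
have : cyc_of y1 = cyc_of y2.
  apply: (@disj_cs _ _ (next (cyc_of y1) y1)) => //; first by rewrite mem_next.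
  by rewrite e mem_next.
move=> E; rewrite -E in e.
by have U := uniq_of_cs i1; rewrite -(prev_next U y1) e (prev_next U).
Qed.

Definition cycp : {perm T} := perm cycf_inj.

Lemma cycpE c y : c \in cs -> y \in c -> cycp y = next c y.
Proof. by move=> cin yc; rewrite /cycp permE /cycf (cyc_ofE cin yc). Qed.

Lemma cycpX c y j : c \in cs -> y \in c -> (cycp ^+ j) y = iter j (next c) y.
Proof.
move=> cin yc.
have mem_it : forall i, iter i (next c) y \in c by elim=> //= i IHi; rewrite mem_next.
elim: j => [|j IH]; first by rewrite expg0 perm1.
by rewrite expgSr permM IH (cycpE cin (mem_it j)).
Qed.

Lemma porbit_cycp c y : c \in cs -> y \in c -> porbit cycp y = [set z in c].
Proof.
move=> cin yc; apply/setP => z; rewrite inE; apply/porbitP/idP.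
- case=> j ->; rewrite (cycpX j cin yc).
  elim: j => [//|j IH] /=; by rewrite mem_next.
- move=> zc.
  have uc := uniq_of_cs cin.
  have iy : index y c < size c by rewrite index_mem.
  have iz : index z c < size c by rewrite index_mem.
  exists (index z c + size c - index y c).
  have e := iter_next_mod y (index z c + size c - index y c) uc iy.
  rewrite nth_index // in e.
  rewrite (cycpX _ cin yc) e.
  have -> : index y c + (index z c + size c - index y c) = index z c + size c by lia.
  by rewrite modnDr modn_small ?nth_index.
Qed.

Lemma uniq_cs : uniq cs.
Proof.
elim: cs Hu Hne => [//|c cs' IH] /=; rewrite cat_uniq => /and3P[uc dis ucs'] ne.
rewrite IH //; last by move=> c' h; apply: ne; rewrite inE h orbT.
rewrite andbT; apply/negP => cin.
have : c != [::] by apply: ne; rewrite inE eqxx.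
case: c dis uc ne cin => [//|y c'] dis _ _ cin _.
move/negP: dis; apply; apply/hasP; exists y; last by rewrite inE eqxx.
by apply/flattenP; exists (y :: c') => //; rewrite inE eqxx.
Qed.

Lemma clen_cycp : perm_eq (clen cycp) (map size cs).
Proof.
pose F (c : seq T) := [set z in c].
have pe : perm_eq (enum (porbits cycp)) (map F cs).
  apply: uniq_perm; first exact: enum_uniq.
    rewrite map_inj_in_uniq ?uniq_cs // => c1 c2 c1in c2in e.
    have := Hne c1in; case: c1 c1in e => [//|y c1'] c1in e _.
    apply: (@disj_cs _ _ y) => //; first by rewrite inE eqxx.
    have : y \in F c2 by rewrite -e inE inE eqxx.
    by rewrite inE.
  move=> O; rewrite mem_enum; apply/imsetP/mapP.
  - case=> y _ ->; case: (cyc_ofP y) => h1 h2; exists (cyc_of y) => //.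
    by rewrite (porbit_cycp h1 h2).
  - case=> c cin ->; have := Hne cin; case: c cin => [//|y c'] cin _.
    exists y => //; by rewrite (porbit_cycp cin) // inE eqxx.
rewrite /clen; apply: perm_trans (perm_map _ pe) _.
rewrite -map_comp (_ : map _ cs = map size cs) //.
apply/eq_in_map => c cin /=.
rewrite cardsE; apply/card_uniqP; exact: uniq_of_cs.
Qed.
End CycSec.

Close Scope group_scope.

Local Open Scope group_scope.

Section AppsSec.
Variable T : finType.

Lemma perm_imsetC (s : {perm T}) (A : {set T}) : s @: (~: A) = ~: (s @: A).
Proof.
apply/setP => z; rewrite inE -{1 2}(permKV s z) !mem_imset; try exact: perm_inj.
by rewrite inE.
Qed.

Lemma sstab_elem (A : {set T}) a b : 0 < #|A| -> 0 < a -> 0 < b -> #|A| + a + b = #|T| ->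
  exists s : {perm T}, s @: A = A /\ perm_eq (clen s) [:: #|A|; a; b].
Proof.
move=> hA ha hb hs.
set e2 := enum (~: A).
have s2 : size e2 = a + b by rewrite -cardE; have := cardsC A; lia.
set cs := [:: enum A; take a e2; drop a e2].
have fl : flatten cs = enum A ++ e2 by rewrite /= cats0 cat_take_drop.
have Hu : uniq (flatten cs).
  rewrite fl cat_uniq !enum_uniq /= andbT; apply/hasPn => y; rewrite mem_enum inE mem_enum.
  by [].
have Hne : forall c, c \in cs -> c != [::].
  move=> c; rewrite !inE => /or3P[] /eqP ->; rewrite -size_eq0 ?size_takel ?size_drop -?cardE; have := cardsC A; lia.
have Hcov : forall y, y \in flatten cs.
  by move=> y; rewrite fl mem_cat !mem_enum inE; case: (y \in A).
exists (cycp Hu Hcov); split.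
  apply/eqP; rewrite eqEcard card_imset ?leqnn ?andbT; last exact: perm_inj.
  apply/subsetP => z /imsetP[y yA ->].
  rewrite (@cycpE _ _ Hu Hcov (enum A)) ?inE ?eqxx ?mem_enum //.
  by rewrite -mem_enum mem_next mem_enum.
apply: perm_trans (clen_cycp Hu Hne Hcov) _.
rewrite /= size_takel ?size_drop ?s2 -?cardE; last lia. by rewrite (_ : a + b - a = b) ?perm_refl; last lia.
Qed.

Lemma two_elem a b : 0 < a -> 0 < b -> a + b = #|T| ->
  exists s : {perm T}, perm_eq (clen s) [:: a; b].
Proof.
move=> ha hb hs.
set e := enum T.
have se : size e = a + b by rewrite -cardE.
set cs := [:: take a e; drop a e].
have fl : flatten cs = e by rewrite /= cats0 cat_take_drop.
have Hu : uniq (flatten cs) by rewrite fl enum_uniq.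
have Hne : forall c, c \in cs -> c != [::].
  move=> c; rewrite !inE => /orP[] /eqP ->; rewrite -size_eq0 ?size_takel ?size_drop; rewrite ?se; lia.
have Hcov : forall y, y \in flatten cs by move=> y; rewrite fl mem_enum.
exists (cycp Hu Hcov).
apply: perm_trans (clen_cycp Hu Hne Hcov) _.
rewrite /= size_takel ?size_drop ?se; last lia. by rewrite (_ : a + b - a = b) ?perm_refl; last lia.
Qed.

Lemma swap_elem (B : {set T}) m : #|B| = m -> #|T| = m + m -> 0 < m ->
  exists s : {perm T}, [/\ s @: B = ~: B, s @: (~: B) = B & perm_eq (clen s) [:: #|T|]].
Proof.
move=> hB hT hm.
have [y0 _] : exists y0 : T, y0 \in B by apply/set0Pn; rewrite -card_gt0 hB.
set e1 := enum B. set e2 := enum (~: B).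
have s1 : size e1 = m by rewrite -cardE.
have s2 : size e2 = m by rewrite -cardE; have := cardsC B; lia.
pose f p := if odd p then nth y0 e2 p./2 else nth y0 e1 p./2.
set c := mkseq f (m + m).
have sc : size c = m + m by rewrite size_mkseq.
have fB p : p < m + m -> (f p \in B) = ~~ odd p.
  move=> hp; rewrite /f; case: ifP => op /=.
    have : nth y0 e2 p./2 \in e2 by apply: mem_nth; rewrite s2; have := odd_double_half p; lia.
    by rewrite mem_enum inE => /negbTE.
  by rewrite -mem_enum mem_nth //; rewrite s1; have := odd_double_half p; lia.
have uc : uniq c.
  rewrite map_inj_in_uniq ?iota_uniq // => p q; rewrite !mem_iota /= => hp0 hq0 e.
  have hp : p < m + m by lia.
  have hq : q < m + m by lia.
  have hpq : odd p = odd q.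
    by have := fB p hp; have := fB q hq; rewrite e => -> /negb_inj.
  have hp2 : p./2 < m by have := odd_double_half p; lia.
  have hq2 : q./2 < m by have := odd_double_half q; lia.
  have hh : p./2 = q./2.
    move: e; rewrite /f hpq; case: ifP => oq e.
      by apply/eqP; rewrite -(nth_uniq y0 (_ : p./2 < size e2) (_ : q./2 < size e2) (enum_uniq (~: B))) ?e ?s2.
    by apply/eqP; rewrite -(nth_uniq y0 (_ : p./2 < size e1) (_ : q./2 < size e1) (enum_uniq B)) ?e ?s1.
  have := odd_double_half p; have := odd_double_half q; rewrite hpq hh; lia.
set cs := [:: c].
have Hu : uniq (flatten cs) by rewrite /= cats0.
have Hne : forall c', c' \in cs -> c' != [::].
  by move=> c'; rewrite inE => /eqP ->; rewrite -size_eq0 sc; lia.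
have Hcov : forall y, y \in flatten cs.
  move=> y; rewrite /= cats0; apply/mapP.
  case yB: (y \in B).
    have iy : index y e1 < m by rewrite -s1 index_mem mem_enum.
    exists (index y e1).*2; first by rewrite mem_iota; lia.
    by rewrite /f odd_double doubleK nth_index ?mem_enum.
  have iy : index y e2 < m by rewrite -s2 index_mem mem_enum inE yB.
  exists (index y e2).*2.+1; first by rewrite mem_iota; lia.
  by rewrite /f /= odd_double /= uphalf_double nth_index ?mem_enum ?inE ?yB.
have cin : c \in cs by rewrite inE.
have sE p : p < m + m -> cycp Hu Hcov (nth y0 c p) = nth y0 c (p.+1 %% (m + m)).
  by move=> hp; rewrite (cycpE Hu Hcov cin) ?mem_nth ?sc // next_nth_mod // sc.
have img : cycp Hu Hcov @: B \subset ~: B.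
  apply/subsetP => z /imsetP[y yB ->].
  have yc : y \in c by have := Hcov y; rewrite /= cats0.
  have hp : index y c < m + m by rewrite -sc index_mem.
  have ey : y = f (index y c) by rewrite -{1}(nth_index y0 yc) nth_mkseq.
  have op : ~~ odd (index y c) by rewrite -fB // -ey.
  have hp1 : (index y c).+1 < m + m.
    by have := odd_double_half (index y c); rewrite (negbTE op); lia.
  rewrite -(nth_index y0 yc) sE // modn_small // nth_mkseq //.
  by rewrite inE fB //= negbK.
have e1' : cycp Hu Hcov @: B = ~: B.
  apply/eqP; rewrite eqEcard img card_imset ?hB; last exact: perm_inj.
  by have := cardsC B; lia.
exists (cycp Hu Hcov); split => //.
  by rewrite perm_imsetC e1' setCK.
apply: perm_trans (clen_cycp Hu Hne Hcov) _.
by rewrite /= sc hT.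
Qed.
End AppsSec.

Close Scope group_scope.


Lemma hct_conj n (x g : {perm 'I_n}) c : has_cycle_type (x ^ g)%g c = has_cycle_type x c.
Proof. exact: (permPl (clenJ x g)) c. Qed.

Lemma inPi_ext n (s t : {perm 'I_n}) : (forall c, has_cycle_type s c = has_cycle_type t c) ->
  inPi s = inPi t.
Proof.
move=> E; rewrite /inPi !E.
congr [|| _, _, _, _, _, _, _ | _]; apply: eq_existsb => i; by rewrite E.
Qed.

Lemma Pi_conj n (x g : {perm 'I_n}) : ((x ^ g)%g \in Pi n) = (x \in Pi n).
Proof. by rewrite !inE; apply: inPi_ext => c; apply: hct_conj. Qed.

Lemma size_clen (T : finType) (s : {perm T}) : size (clen s) = #|porbits s|.
Proof. by rewrite /clen size_map cardE. Qed.

Lemma binom_term a b n i : i <= n -> 'C(n, i) * (a ^ (n - i) * b ^ i) <= (a + b) ^ n.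
Proof.
move=> hi; rewrite expnDn (bigD1 (Ordinal (_ : i < n.+1))) //=.
exact: leq_addr.
Qed.

Lemma finish a F D g c r n : a * 3^n <= 10 * n * F -> F <= D * g -> g <= c * n^r -> 0 < c ->
  10 * n * D * n^r < 3^n -> a < c.
Proof.
move=> h1 h2 h3 hc h4.
have h5 : a * 3^n < c * 3^n.
  apply: leq_ltn_trans h1 _.
  apply: (@leq_ltn_trans (10 * n * (D * (c * n^r)))).
    by rewrite leq_mul2l (leq_trans h2) ?orbT // leq_mul2l h3 orbT.
  have -> : 10 * n * (D * (c * n^r)) = c * (10 * n * D * n^r) by lia.
  by rewrite ltn_mul2l hc.
by rewrite ltn_mul2r in h5; case/andP: h5.
Qed.

Lemma key n (G : {group {perm 'I_n}}) x D a : 0 < n -> x \in G -> x \in Pi n ->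
  a * 3^n <= 10 * n * n`! -> n`! <= D * #|G| -> 10 * n * D * n ^ #|porbits x| < 3^n ->
  a < #|G :&: Pi n|.
Proof.
move=> n0 xG xPi h1 h2 h3.
have y0 : 'I_n := Ordinal n0.
have cb := class_bound G x y0; rewrite card_ord in cb.
have sub : (x ^: G)%g \subset G :&: Pi n.
  apply/subsetP => y /imsetP[g gG ->]; rewrite inE groupJ //= Pi_conj //.
apply: leq_trans (subset_leq_card sub).
apply: finish h1 h2 cb _ h3.
by rewrite card_gt0; apply/set0Pn; exists x; apply: class_refl.
Qed.

Lemma num_alt n : 36 <= n -> 10 * n * 2 * n ^ 2 < 3 ^ n.
Proof.
move=> hn; have h := num_2block hn.
have p2 : 2 * n <= 2 ^ n.
  elim: n {hn h} => [//|n IH]; rewrite expnS.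
  case: n IH => [//|n] IH; have : 1 <= 2 ^ n.+1 by rewrite expn_gt0. lia.
apply: leq_ltn_trans h.
have -> : 10 * n * 2 * n ^ 2 = 10 * n ^ 2 * (2 * n) by lia.
by rewrite leq_mul2l p2 orbT.
Qed.

Lemma num_blk n : 36 <= n -> 10 * n * 'C(n, n %/ 2) * n ^ 1 < 3 ^ n.
Proof.
move=> hn; have h := num_2block hn.
have hb := @binom_term 1 1 n (n %/ 2) (leq_div _ _).
rewrite !exp1n !muln1 (_ : 1 + 1 = 2) // in hb.
apply: leq_ltn_trans h.
have -> : 10 * n * 'C(n, n %/ 2) * n ^ 1 = 10 * n ^ 2 * 'C(n, n %/ 2) by rewrite expn1; lia.
by rewrite leq_mul2l hb orbT.
Qed.

Lemma num_set n i : 36 <= n -> 3 * i + 3 <= n -> 10 * n * 'C(n, i) * n ^ 3 < 3 ^ n.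
Proof.
move=> hn hi.
set j := n - i.
have hj : 25 <= j by rewrite /j; lia.
have h := num_setstab hj.
have e4 : (2 * n) ^ 4 <= (3 * j) ^ 4 by rewrite leq_exp2r //; rewrite /j; lia.
rewrite !expnMn in e4.
have h2 : 10 * n ^ 4 < 2 ^ j.
  have : 16 * (10 * n ^ 4) < 16 * 2 ^ j.
    apply: leq_ltn_trans h; rewrite (_ : 2 ^ 4 = 16) // (_ : 3 ^ 4 = 81) // in e4. lia.
  by rewrite ltn_mul2l.
have iln : i <= n by lia.
have hb := @binom_term 2 1 n i iln.
rewrite exp1n muln1 (_ : 2 + 1 = 3) // -/j in hb.
have C0 : 0 < 'C(n, i) by rewrite bin_gt0; lia.
apply: (leq_trans _ hb).
have -> : 10 * n * 'C(n, i) * n ^ 3 = (10 * n ^ 4) * 'C(n, i).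
  by rewrite (expnS n 3); lia.
by rewrite mulnC ltn_pmul2l.
Qed.


Lemma porbits_of (T : finType) (s : {perm T}) (L : seq nat) : perm_eq (clen s) L -> #|porbits s| = size L.
Proof. by move=> h; rewrite -size_clen (perm_size h). Qed.

Theorem lemma3p10 (n : nat) (Hn : 30 < n) (H6 : 6 %| n)
  (M : {group {perm 'I_n}})
  (Mmax : maximal M [set: {perm 'I_n}])
  (Mimp : exists (k l : nat) (P : {set {set 'I_n}}),
            [/\ 2 <= k, 2 <= l, k * l = n, uniform_partition P k l & (M :=: part_stab P)])
  (MnotH : ~ inHfam (gval M)) :
  forall H : {set {perm 'I_n}}, inHfam H -> #|M :&: Pi n| < #|H :&: Pi n|.
Proof.
move=> H HH.
have n36 : 36 <= n by lia.
have n0 : 0 < n by lia.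
have nev : n = n %/ 2 + n %/ 2 by lia.
case: Mimp => k [l [P [hk hl hkl Pu MP]]].
case: (Pu) => Ppart Pcard Psize.
have l3 : 3 <= l.
  case: (ltngtP l 2) => h; [lia|done|].
  exfalso; subst l; apply: MnotH; left; exists P; split => //.
  by have -> : n %/ 2 = k by lia.
have Mc : #|M| <= l`! * (k`!)^l.
  by rewrite MP; exact: (pstab_card Ppart Pcard Psize).
have A : #|M :&: Pi n| * 3^n <= 10 * n * n`!.
  have := num_phi hk l3; rewrite hkl => h.
  apply: leq_trans h; rewrite leq_mul2r; apply/orP; right.
  by apply: leq_trans Mc; apply: subset_leq_card; apply: subsetIl.
case: HH => [[P2 [Pu2 ->]] | [-> | [i [A0 [hi1 hi2 hA ->]]]]].
-
  case: Pu2 => P2part P2card P2size.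
  have [B1 B1P] : exists B1, B1 \in P2 by apply/set0Pn; rewrite -card_gt0 P2card.
  have trP2 : trivIset P2 by case/and3P: P2part.
  have cB1 : #|B1| = n %/ 2 := P2size B1 B1P.
  have cCB1 : #|~: B1| = n %/ 2 by have := cardsC B1; rewrite card_ord; lia.
  have other : forall B, B \in P2 -> B = B1 \/ B = ~: B1.
    move=> B BP; case: (eqVneq B B1) => [->|ne]; [by left|right].
    have dj := (trivIsetP trP2) B B1 BP B1P ne.
    apply/eqP; rewrite eqEcard cCB1 P2size // leqnn andbT.
    rewrite disjoint_subset in dj.
    by apply/subsetP => y yB; have := subsetP dj y yB; rewrite !inE.
  have CB1P : ~: B1 \in P2.
    have : 0 < #|P2 :\ B1| by have := cardsD1 B1 P2; rewrite B1P P2card; lia.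
    case/card_gt0P => B /setD1P[ne BP].
    by case: (other B BP) => e; [move: ne; rewrite e eqxx | rewrite -e].
  have [s [s1 s2 sc]] := swap_elem cB1 (etrans (card_ord n) nev) (ltac:(lia) : 0 < n %/ 2).
  have sP : s \in pstab P2.
    rewrite inE; apply/forallP => B; apply/implyP => BP.
    by case: (other B BP) => ->; [rewrite s1 | rewrite s2].
  apply: (@key n (pstab_grp P2) s 'C(n, n %/ 2)) => //.
  + rewrite inE /inPi (_ : has_cycle_type s [:: n]) //.
    by rewrite /has_cycle_type -{2}(card_ord n).
  + have S := sstab_card B1; rewrite card_ord cB1 in S.
    apply: leq_trans S _; rewrite mulnC leq_mul2l; apply/orP; right.
    apply: subset_leq_card; apply/subsetP => t; rewrite !inE => /eqP tB.
    apply/forallP => B; apply/implyP => BP.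
    by case: (other B BP) => ->; [rewrite tB | rewrite perm_imsetC tB].
  + by rewrite (porbits_of sc); apply: num_blk.
-
  have [a [b [ha hb hab hPi]]] : exists a b, [/\ 0 < a, 0 < b, a + b = n &
      forall x : {perm 'I_n}, has_cycle_type x [:: a; b] -> inPi x].
    case on2: (odd (n %/ 2)).
    + exists (n %/ 2 - 2), (n %/ 2 + 2); split; try lia.
      by move=> x hx; rewrite /inPi on2 hx /= !orbT.
    + exists (n %/ 2 - 1), (n %/ 2 + 1); split; try lia.
      by move=> x hx; rewrite /inPi on2 hx /= !orbT.
  have [x xc] := @two_elem 'I_n a b ha hb (etrans hab (esym (card_ord n))).
  apply: (@key n ('Alt_('I_n))%G x 2) => //.
  + rewrite Alt_even /odd_perm card_ord (porbits_of xc) /=.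
    by have := odd_double_half n; case: (odd n) => //=; lia.
  + by rewrite inE; apply: hPi.
  + rewrite card_Alt ?card_ord //. lia.
  + by rewrite (porbits_of xc); apply: num_alt.
-
  have hi3 : 3 * i + 3 <= n by lia.
  have [a [b [ha hb hab hPi]]] : exists a b, [/\ 0 < a, 0 < b, i + a + b = n &
      forall x : {perm 'I_n}, has_cycle_type x [:: i; a; b] -> inPi x].
    have iln : i < n by lia.
    have hi := odd_double_half i.
    case i1: (i == 1).
      move/eqP: i1 => i1; rewrite i1.
      exists (n %/ 2 - 2), (n %/ 2 + 1); split; try lia.
      by move=> x hx; rewrite /inPi hx /= !orbT.
    case oi: (odd i).
      exists ((n - i - 1) %/ 2), ((n - i + 1) %/ 2); split; try lia.
      move=> x hx.
      have E : [exists i0 : 'I_n, [&& odd i0, 3 <= i0, i0 <= n %/ 3 - 1 &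
        has_cycle_type x [:: val i0; (n - i0 - 1) %/ 2; (n - i0 + 1) %/ 2]]].
        apply/existsP; exists (Ordinal iln); rewrite /= oi hx /=; apply/andP; split; lia.
      by rewrite /inPi E /= !orbT.
    case od: (odd ((n - i) %/ 2)).
      exists ((n - i) %/ 2), ((n - i) %/ 2); split; try lia.
      move=> x hx.
      have E : [exists i0 : 'I_n, [&& ~~ odd i0, 2 <= i0, i0 <= n %/ 3 - 1, odd ((n - i0) %/ 2) &
        has_cycle_type x [:: val i0; (n - i0) %/ 2; (n - i0) %/ 2]]].
        apply/existsP; exists (Ordinal iln); rewrite /= oi od hx /=; apply/andP; split; lia.
      by rewrite /inPi E /= !orbT.
    case i2: (i == 2).
      move/eqP: i2 => i2; rewrite i2; rewrite i2 in od.
      exists (n %/ 2 - 4), (n %/ 2 + 2); split; try lia.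
      by move=> x hx; rewrite /inPi od hx /= !orbT.
    exists ((n - i) %/ 2 - 1), ((n - i) %/ 2 + 1); split; try lia.
    move=> x hx.
    have E : [exists i0 : 'I_n, [&& ~~ odd i0, 4 <= i0, i0 <= n %/ 3 - 1, ~~ odd ((n - i0) %/ 2) &
      has_cycle_type x [:: val i0; (n - i0) %/ 2 - 1; (n - i0) %/ 2 + 1]]].
      apply/existsP; exists (Ordinal iln); rewrite /= oi od hx /=; apply/andP; split; lia.
    by rewrite /inPi E /= !orbT.
  have [x [xA xc]] := @sstab_elem 'I_n A0 a b (ltac:(rewrite hA; lia) : 0 < #|A0|) ha hb (ltac:(rewrite hA card_ord; lia) : #|A0| + a + b = #|'I_n|).
  rewrite hA in xc.
  apply: (@key n (sstab_grp A0) x 'C(n, i)) => //.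
  + by rewrite inE xA eqxx.
  + by rewrite inE; apply: hPi.
  + by have S := sstab_card A0; rewrite card_ord hA mulnC in S.
  + by rewrite (porbits_of xc); apply: num_set.
Qed.
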